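(* Let $u_1=(1,0)$, $u_2=(0,1)$, $u_3=(1,1)$ in $\mathbb{Z}^2$, $S=\{\pm u_1,\pm u_2,\pm u_3\}$, and $\mathcal{P}=\{P_\alpha\}_{\alpha\in S}$ on $\mathbb{C}^6$ with $P_{u_i}=P_{2i-1}$, $P_{-u_i}=P_{2i}$ ($i=1,2,3$). Then $U(S,\mathcal{P},G_6)$ acting on $\ell^2(\mathbb{Z}^2,\mathbb{C}^6)$ has both $1$ and $-1$ as eigenvalues.
   Context: $P_j$ is the orthogonal projection of $\mathbb{C}^6$ onto $\mathbb{C}\mathbf{e}_j$, $\mathbf{e}_j$ the standard basis. $(\tau^\alpha f)(x)=f(x-\alpha)$, $U(S,\mathcal{P},C)=\big(\sum_{\alpha\in S}\tau^\alpha P_\alpha\big)C$ with $C$ acting pointwise. $G_6=\frac26J-I$, $J$ the $6\times6$ all-ones matrix. Eigenvalue means point spectrum. *)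

(* Defs.v *)
From HB Require Import structures.
From mathcomp Require Import all_boot all_order all_algebra.
Set Implicit Arguments. Unset Strict Implicit. Unset Printing Implicit Defensive.
Import Order.TTheory GRing.Theory Num.Theory.
Local Open Scope ring_scope.

Definition pt := (int * int)%type.
Definition ptsub (x a : pt) : pt := (x.1 - a.1, x.2 - a.2).
Definition ptopp (a : pt) : pt := (- a.1, - a.2).

Section Defs.
Variable C : numClosedFieldType.

Definition field6 := pt -> 'cV[C]_6.

Definition is_l2 (f : field6) : Prop :=
  exists B : C, forall s : seq pt, uniq s ->
    \sum_(x <- s) \sum_(i < 6) `|f x i 0| ^+ 2 <= B.

Definition Pj (j : 'I_6) : 'M[C]_6 := delta_mx j j.

(* U(S,P,Cm) f = (sum_{a in S} tau^a P_a) (Cm f), (tau^a g)(x) = g(x - a) *)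
Definition Uop (S : seq pt) (P : pt -> 'M[C]_6) (Cm : 'M[C]_6) (f : field6)
  : field6 := fun x => \sum_(a <- S) P a *m (Cm *m f (ptsub x a)).

Definition G6 : 'M[C]_6 := (2%:R / 6%:R) *: const_mx 1 - 1%:M.

Definition is_eigenvalue (T : field6 -> field6) (l : C) : Prop :=
  exists f : field6, is_l2 f /\ (exists x, f x != 0) /\ forall x, T f x = l *: f x.
End Defs.

Definition u1 : pt := (1, 0).
Definition u2 : pt := (0, 1).
Definition u3 : pt := (1, 1).
Definition S3 : seq pt := [:: u1; ptopp u1; u2; ptopp u2; u3; ptopp u3].

(* 0-based index j of P_j for each element of S:
   P_{u_i} = P_{2i-1}, P_{-u_i} = P_{2i} (1-based), i.e. 0-based 2i-2, 2i-1. *)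
Definition Pfam (C : numClosedFieldType) (a : pt) : 'M[C]_6 :=
  \sum_(j < 6 | nth (0, 0) S3 j == a) Pj C j.

(* Main.v *)
Require Import Defs.
From HB Require Import structures.
From mathcomp Require Import all_boot all_order all_algebra.
From mathcomp Require Import ring lra.
Import Order.TTheory GRing.Theory Num.Theory.
Local Open Scope ring_scope.

Definition box : seq pt := [seq (a%:Z, b%:Z) | a <- iota 0 3, b <- iota 0 3].
Definition bigbox : seq pt :=
  [seq (a%:Z - 1, b%:Z - 1) | a <- iota 0 5, b <- iota 0 5].

Definition tbl1 : seq (seq int) :=
 [:: [:: 0; 1; 0; 1; 0; 1];
 [:: 0; 1; 1; 0; 0; 1];
 [:: 0; 0; 0; 0; 0; 0];
 [:: 1; 0; 0; 1; 0; 1];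
 [:: 1; 1; 1; 1; 1; 1];
 [:: 0; 1; 1; 0; 1; 0];
 [:: 0; 0; 0; 0; 0; 0];
 [:: 1; 0; 0; 1; 1; 0];
 [:: 1; 0; 1; 0; 1; 0]].
Definition tbl2 : seq (seq int) :=
 [:: [:: 0; -1; 0; -1; 0; -1];
 [:: 0; 1; 1; 0; 0; 1];
 [:: 0; 0; 0; 0; 0; 0];
 [:: 1; 0; 0; 1; 0; 1];
 [:: -1; 1; -1; 1; 1; -1];
 [:: 0; -1; -1; 0; -1; 0];
 [:: 0; 0; 0; 0; 0; 0];
 [:: -1; 0; 0; -1; -1; 0];
 [:: 1; 0; 1; 0; 1; 0]].

Definition cv (t : seq (seq int)) (x : pt) (i : nat) : int :=
  if x \in box then nth 0 (nth [::] t (index x box)) i else 0.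

Definition csum (t : seq (seq int)) (y : pt) : int :=
  cv t y 0 + cv t y 1 + cv t y 2 + cv t y 3 + cv t y 4 + cv t y 5.

Definition eqn_ok (t : seq (seq int)) (l : int) (x : pt) (j : nat) : bool :=
  let y := ptsub x (nth (0,0) S3 j) in
  csum t y == 3 * cv t y j + 3 * l * cv t x j.

Definition check (t : seq (seq int)) (l : int) : bool :=
  all (fun x => all (eqn_ok t l x) (iota 0 6)) bigbox.

Lemma check1 : check tbl1 1. Proof. by vm_compute. Qed.
Lemma check2 : check tbl2 (-1). Proof. by vm_compute. Qed.

Lemma boxS : all (fun p => all (fun a => (p.1 + a.1, p.2 + a.2) \in bigbox) S3) box.
Proof. by vm_compute. Qed.
Lemma boxbig : all (fun p => p \in bigbox) box.
Proof. by vm_compute. Qed.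

Lemma S3injb : all (fun i => all (fun k => (nth (0,0) S3 i == nth (0,0) S3 k) == (i == k)) (iota 0 6)) (iota 0 6).
Proof. by vm_compute. Qed.

Lemma Pfam_nth (C : numClosedFieldType) (k : 'I_6) : Pfam C (nth (0,0) S3 k) = Pj C k.
Proof.
rewrite /Pfam (big_pred1 k) // => i /=.
move/allP: S3injb => /(_ i); rewrite mem_iota ltn_ord => /(_ isT) /allP /(_ k).
by rewrite mem_iota ltn_ord => /(_ isT) /eqP.
Qed.

Lemma Uop_entry (C : numClosedFieldType) (M : 'M[C]_6) f x (j : 'I_6) :
  Uop S3 (@Pfam C) M f x j 0 = (M *m f (ptsub x (nth (0,0) S3 j))) j 0.
Proof.
rewrite /Uop (big_nth (0,0)) big_mkord.
have -> : \sum_(i < size S3) Pfam C (nth (0, 0) S3 i) *m (M *m f (ptsub x (nth (0, 0) S3 i)))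
  = \sum_(i < 6) Pj C i *m (M *m f (ptsub x (nth (0, 0) S3 i))).
  by apply: eq_bigr => i _; rewrite (Pfam_nth C i).
rewrite summxE (bigD1 j) //= big1 ?addr0.
  rewrite mxE (bigD1 j) //= big1 ?addr0 /Pj ?mxE ?eqxx ?mul1r //.
  by move=> k /negPf kj; rewrite mxE kj andbF mul0r.
move=> k /negPf kj; rewrite mxE big1 // => l _.
by rewrite /Pj mxE eq_sym kj /= mul0r.
Qed.

Lemma G6_entry (C : numClosedFieldType) (v : 'cV[C]_6) (j : 'I_6) :
  (G6 C *m v) j 0 = 2%:R / 6%:R * \sum_(k < 6) v k 0 - v j 0.
Proof.
rewrite /G6 mulmxBl mul1mx -scalemxAl !mxE; congr (_ * _ - _).
by apply: eq_bigr => k _; rewrite mxE mul1r.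
Qed.

Definition fv (C : numClosedFieldType) t : field6 C :=
  fun x => \col_(i < 6) ((cv t x i)%:~R : C).

Lemma eqn_all t l : check t l -> forall x (j : 'I_6), eqn_ok t l x j.
Proof.
move=> ch x j; case: (boolP (x \in bigbox)) => xb.
  move/allP: ch => /(_ x xb) /allP /(_ (nat_of_ord j)); apply.
  by rewrite mem_iota ltn_ord.
have h1 : x \notin box.
  by apply: contra xb => xB; move/allP: boxbig => /(_ x xB).
have h2 : ptsub x (nth (0,0) S3 j) \notin box.
  apply: contra xb => yB.
  move/allP: boxS => /(_ _ yB) /allP /(_ (nth (0,0) S3 j)).
  rewrite mem_nth // => /(_ isT).
  by case: x {h1} yB => a b /= _; rewrite !subrK.
by rewrite /eqn_ok /csum /cv (negbTE h1) (negbTE h2) !mulr0 !addr0.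
Qed.

Lemma eig (C : numClosedFieldType) t (l : int) : check t l ->
  forall x, Uop S3 (@Pfam C) (G6 C) (fv C t) x = l%:~R *: fv C t x.
Proof.
move=> ch x; apply/matrixP => j k; rewrite (ord1 k) Uop_entry G6_entry !mxE.
have E := @eqn_all t l ch x j; move: E; rewrite /eqn_ok => /eqP.
set y := ptsub x _ => E.
have -> : \sum_(k0 < 6) fv C t y k0 0 = (csum t y)%:~R.
  rewrite /csum !big_ord_recr big_ord0 /= !mxE add0r.
  by rewrite !intrD.
rewrite E !intrD !intrM.
have -> : ((3 : int)%:~R : C) = 3%:R by [].
have h6 : (6%:R : C) != 0 by rewrite pnatr_eq0.
by field.
Qed.

Definition bnd t : bool :=
  all (fun x => all (fun i => cv t x i \in [:: -1; 0; 1]) (iota 0 6)) box.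
Lemma bnd1 : bnd tbl1. Proof. by vm_compute. Qed.
Lemma bnd2 : bnd tbl2. Proof. by vm_compute. Qed.

Lemma l2 (C : numClosedFieldType) t : bnd t -> is_l2 (fv C t).
Proof.
move=> bt; exists 54%:R => s us.
apply: le_trans (_ : \sum_(x <- s) 6%:R * (x \in box)%:R <= _).
  apply: ler_sum => x _; case: (boolP (x \in box)) => xB /=.
    rewrite mulr1; apply: le_trans (_ : \sum_(i < 6) (1:C) <= _).
      apply: ler_sum => i _; rewrite mxE.
      move/allP: bt => /(_ x xB) /allP /(_ (nat_of_ord i)).
      rewrite mem_iota ltn_ord => /(_ isT); rewrite !inE => /or3P [] /eqP ->.
      - have -> : (((-1 : int))%:~R : C) = -1 by [].
        by rewrite normrN normr1 expr1n.
      - by rewrite normr0 expr0n.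
      - by rewrite normr1 expr1n.
    by rewrite sumr_const card_ord.
  rewrite mulr0 big1 // => i _.
  by rewrite mxE /cv (negbTE xB) normr0 expr0n.
rewrite -mulr_sumr -natr_sum.
have -> : \sum_(x <- s) ((x \in box) : nat) = count (mem box) s.
  by elim: s {us} => [|a s IH]; rewrite ?big_nil ?big_cons ?IH. 
rewrite -natrM ler_nat.
have : (count (mem box) s <= 9)%N.
  rewrite -size_filter (_ : 9%N = size box) //.
  apply: uniq_leq_size (filter_uniq _ us) _ => z.
  by rewrite mem_filter => /andP[].
move=> h; apply: leq_trans (leq_mul (leqnn 6) h) _.
by [].
Qed.

Lemma nz (C : numClosedFieldType) t : cv t (1,1) 1 != 0 -> exists x, fv C t x != 0.
Proof.
move=> h; exists (1,1); apply/negP => /eqP /matrixP /(_ (inord 1) 0).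
rewrite !mxE inordK // => /eqP; rewrite intr_eq0; exact/negP.
Qed.

Theorem corollary4p2 (C : numClosedFieldType) :
  is_eigenvalue (Uop S3 (@Pfam C) (G6 C)) 1 /\
  is_eigenvalue (Uop S3 (@Pfam C) (G6 C)) (-1).
Proof.
split.
  exists (fv C tbl1); split; first exact: l2 bnd1.
  split; first by apply: nz; vm_compute.
  by move=> x; rewrite (@eig C tbl1 1 check1) scale1r.
exists (fv C tbl2); split; first exact: l2 bnd2.
split; first by apply: nz; vm_compute.
move=> x; rewrite (@eig C tbl2 (-1) check2).
have -> : (((-1 : int))%:~R : C) = -1 by []. 
by [].
Qed.
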